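(* Let $\Gamma$ be a variation of FSSP that has a solution. Then $\Gamma$ has a minimal-time solution if and only if there is a constant $c$ such that $\mathrm{mss}_\Gamma(C)\le c$ for every configuration $C$ of $\Gamma$.
   Context: Fix $k\ge1$; positions are elements of $\mathbb{Z}^k$, and with $\epsilon_0,\dots,\epsilon_{2k-1}$ the vectors $\pm e_1,\dots,\pm e_k$ in a fixed order, $\mathrm{bc}_C(p)\in\{0,1\}^{2k}$ has $i$-th entry $1$ iff $p+\epsilon_i\in C$. A variation $\Gamma$ of FSSP is specified by a set of configurations, each a finite set of positions containing the origin (the general). Firing squad model (boundary-sensitive): a finite automaton $A$ has a finite state set with quiescent state $\mathrm{Q}$, general states $\mathrm{G}_0,\dots,\mathrm{G}_{m-1}$, firing states $\mathcal F\not\ni\mathrm{Q}$, a map $\tau:\{0,1\}^{2k}\to\{0,\dots,m-1\}$ and a transition function from the current state and the $2k$ neighbour states ($\#$ where no node), with $\mathrm{Q}$ stable when all inputs lie in $\{\mathrm{Q},\#\}$. With a copy of $A$ at each position of a configuration $C$, at time $0$ the origin is in $\mathrm{G}_{\tau(\mathrm{bc}_C(\text{origin}))}$ and all other nodes in $\mathrm{Q}$; nodes update synchronously. $A$ is a solution of $\Gamma$ if for every configuration $C$ of $\Gamma$ there is a time $t_C$ such that no node is in $\mathcal F$ before $t_C$ and all nodes are in $\mathcal F$ at $t_C$; write $\mathrm{ft}(C,A)=t_C$. $\mathrm{mft}_\Gamma(C)=\min_A\mathrm{ft}(C,A)$ over all solutions $A$. A minimal-time solution is a solution $\tilde A$ with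 $\mathrm{ft}(C,\tilde A)=\mathrm{mft}_\Gamma(C)$ for every configuration $C$ (equivalently, $\mathrm{ft}(C,\tilde A)\le\mathrm{ft}(C,A)$ for all solutions $A$ and all $C$). $\mathrm{mss}_\Gamma(C)$ is the minimum number of states of a solution $A$ of $\Gamma$ with $\mathrm{ft}(C,A)=\mathrm{mft}_\Gamma(C)$. *)

(* Defs.v *)
From HB Require Import structures.
From mathcomp Require Import all_boot all_order all_algebra.
From mathcomp Require Import finmap boolp.
Set Implicit Arguments. Unset Strict Implicit. Unset Printing Implicit Defensive.
Import GRing.Theory Num.Theory.
Local Open Scope ring_scope.


Definition pos (k : nat) := {ffun 'I_k -> int}.

Definition origin (k : nat) : pos k := [ffun _ => 0].
Definition padd (k : nat) (p q : pos k) : pos k := [ffun i => p i + q i].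

(* The 2k unit vectors eps_j, j : 'I_(k+k), in the fixed order
   eps_j = + e_j for j < k and eps_(k+i) = - e_i. *)
Definition eps (k : nat) (j : 'I_(k + k)) : pos k :=
  [ffun i => match split j with
             | inl a => if i == a then 1 else 0
             | inr a => if i == a then -1 else 0
             end].

Definition config (k : nat) := {fset pos k}.

Definition bc (k : nat) (C : config k) (p : pos k) : {ffun 'I_(k + k) -> bool} :=
  [ffun j => padd p (eps j) \in C].

Definition variation (k : nat) (Gam : config k -> Prop) : Prop :=
  forall C, Gam C -> origin k \in C.

(* Boundary-sensitive firing squad automata.  Neighbour inputs are given as a
   finite function 'I_(k+k) -> option St, where None stands for '#'. *)
Record automaton (k : nat) := Automaton {
  St : finType;
  Qst : St;
  ngen : nat;
  gen : 'I_ngen -> St;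
  fire : {set St};
  tau : {ffun 'I_(k + k) -> bool} -> 'I_ngen;
  delta : St -> {ffun 'I_(k + k) -> option St} -> St;
  Q_notin_fire : Qst \notin fire;
  Q_stable : forall nb : {ffun 'I_(k + k) -> option St},
      (forall j, (nb j == None) || (nb j == Some Qst)) -> delta Qst nb = Qst
}.

(* run A C t p : state of the node at position p at time t (meaningful for p \in C) *)
Fixpoint run (k : nat) (A : automaton k) (C : config k) (t : nat) (p : pos k)
  : St A :=
  match t with
  | 0 => if p == origin k then @gen _ A (@tau _ A (bc C (origin k))) else Qst A
  | t'.+1 => @delta _ A (run A C t' p)
               [ffun j => if padd p (eps j) \in C
                          then Some (run A C t' (padd p (eps j))) else None]
  end.

Definition fires_at (k : nat) (A : automaton k) (C : config k) (t : nat) : Prop :=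
  (forall t', (t' < t)%N -> forall p, p \in C -> run A C t' p \notin @fire _ A) /\
  (forall p, p \in C -> run A C t p \in @fire _ A).

Definition is_solution (k : nat) (Gam : config k -> Prop) (A : automaton k) : Prop :=
  forall C, Gam C -> exists t, fires_at A C t.

(* Minimum of a set of naturals (0 if empty). *)
Lemma pmin_ex (P : nat -> Prop) : (exists n, P n) -> exists n, `[< P n >].
Proof. by case=> n Pn; exists n; apply/asboolP. Qed.

Definition pmin (P : nat -> Prop) : nat :=
  match pselect (exists n, P n) with
  | left h => ex_minn (pmin_ex h)
  | right _ => 0%N
  end.

Definition mft (k : nat) (Gam : config k -> Prop) (C : config k) : nat :=
  pmin (fun t => exists A : automaton k, is_solution Gam A /\ fires_at A C t).

Definition minimal_time_solution (k : nat) (Gam : config k -> Prop)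
  (A : automaton k) : Prop :=
  is_solution Gam A /\ forall C, Gam C -> fires_at A C (mft Gam C).

Definition mss (k : nat) (Gam : config k -> Prop) (C : config k) : nat :=
  pmin (fun n => exists A : automaton k,
           [/\ is_solution Gam A, fires_at A C (mft Gam C) & #|St A| = n]).

(* Main.v *)
Require Import Defs.
From HB Require Import structures.
From mathcomp Require Import all_boot all_order all_algebra.
From mathcomp Require Import finmap boolp.
Set Implicit Arguments. Unset Strict Implicit. Unset Printing Implicit Defensive.

Lemma pmin_le (P : nat -> Prop) n : P n -> (pmin P <= n)%N.
Proof.
move=> Pn; rewrite /pmin; case: pselect => [h|h]; last by [].
case: ex_minnP => m _ hm; apply: hm; exact/asboolP.
Qed.

Lemma pmin_spec (P : nat -> Prop) : (exists n, P n) -> P (pmin P).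
Proof.
move=> ex; rewrite /pmin; case: pselect => [h|//].
by case: ex_minnP => m /asboolP.
Qed.

Section Gen.
Variable k : nat.
Local Notation BC := {ffun 'I_(k + k) -> bool}.
Variable S : finType.

Fixpoint grun (Q : S) (gf : BC -> S)
  (del : S -> {ffun 'I_(k + k) -> option S} -> S) (C : config k) (t : nat)
  (p : pos k) : S :=
  match t with
  | 0 => if p == origin k then gf (bc C (origin k)) else Q
  | t'.+1 => del (grun Q gf del C t' p)
      [ffun j => if padd p (eps j) \in C
                 then Some (grun Q gf del C t' (padd p (eps j))) else None]
  end.

Lemma grun_S Q gf del C t p : grun Q gf del C t.+1 p = del (grun Q gf del C t p)
      [ffun j => if padd p (eps j) \in C
                 then Some (grun Q gf del C t (padd p (eps j))) else None].
Proof. by []. Qed.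

Definition gfires (fr : {set S}) (r : nat -> pos k -> S) (C : {fset pos k})
  (t : nat) : Prop :=
  (forall t', (t' < t)%N -> forall p, p \in C -> r t' p \notin fr) /\
  (forall p, p \in C -> r t p \in fr).

Variables (Q : S) (fr : {set S}) (gf : BC -> S)
  (del : S -> {ffun 'I_(k + k) -> option S} -> S)
  (h1 : Q \notin fr)
  (h2 : forall nb : {ffun 'I_(k + k) -> option S},
      (forall j, (nb j == None) || (nb j == Some Q)) -> del Q nb = Q).

Definition mkA : automaton k :=
  @Automaton k S Q #|{: BC}| (fun i => gf (enum_val i)) fr
    (fun b => enum_rank b) del h1 h2.

Lemma run_mk C t p : run mkA C t p = grun Q gf del C t p.
Proof.
elim: t p => [|t IH] p /=; first by rewrite enum_rankK.
rewrite IH; congr del; apply/ffunP => j; rewrite !ffunE.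
by case: ifP => // _; rewrite IH.
Qed.

Lemma fires_mk C t : fires_at mkA C t <-> gfires fr (grun Q gf del C) C t.
Proof.
rewrite /fires_at /gfires; split; case=> a b; split.
- by move=> t' lt p pC; rewrite -run_mk; apply: a.
- by move=> p pC; rewrite -run_mk; apply: b.
- by move=> t' lt p pC; rewrite run_mk; apply: a.
- by move=> p pC; rewrite run_mk; apply: b.
Qed.
End Gen.

Section Codes.
Variables (k c : nat).
Local Notation BC := {ffun 'I_(k + k) -> bool}.
Local Notation T := 'I_c.+1.

Definition code := (T * {set T} * {ffun BC -> T} *
  {ffun (T * {ffun 'I_(k + k) -> option T}) -> T})%type.

Definition cQ (d : code) : T := d.1.1.1.
Definition cF (d : code) : {set T} := d.1.1.2.
Definition cG (d : code) : BC -> T := fun b => d.1.2 b.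
Definition cD (d : code) : T -> {ffun 'I_(k + k) -> option T} -> T :=
  fun s nb => d.2 (s, nb).
Definition crun (d : code) := grun (cQ d) (cG d) (cD d).

Definition valid (d : code) : bool := (cQ d \notin cF d) &&
  [forall nb : {ffun 'I_(k + k) -> option T},
     [forall j, (nb j == None) || (nb j == Some (cQ d))] ==>
     (cD d (cQ d) nb == cQ d)].

Lemma validQ d : valid d -> cQ d \notin cF d.
Proof. by case/andP. Qed.

Lemma validS d : valid d -> forall nb : {ffun 'I_(k + k) -> option T},
  (forall j, (nb j == None) || (nb j == Some (cQ d))) -> cD d (cQ d) nb = cQ d.
Proof.
case/andP => _ /forallP H nb hnb; apply/eqP; apply: (implyP (H nb)).
by apply/forallP.
Qed.

Definition autoOf d (h : valid d) : automaton k :=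
  @mkA k T (cQ d) (cF d) (cG d) (cD d) (validQ h) (validS h).

Lemma fires_autoOf d (h : valid d) C t :
  fires_at (autoOf h) C t <-> gfires (cF d) (crun d C) C t.
Proof. exact: fires_mk. Qed.

Definition triv : code := (ord0, set0, [ffun _ => ord0], [ffun _ => ord0]).

Lemma valid_triv : valid triv.
Proof.
apply/andP; split; first by rewrite /cF /= in_set0.
by apply/forallP => nb; rewrite /cD ffunE eqxx implybT.
Qed.

Variable Gam : config k -> Prop.

Definition gsol (d : code) : Prop :=
  forall C, Gam C -> exists t, gfires (cF d) (crun d C) C t.

Definition good (d : code) : bool := valid d && `[< gsol d >].
Definition eff (d : code) : code := if good d then d else triv.

Lemma valid_eff d : valid (eff d).
Proof. rewrite /eff; case: ifP => [/andP[]//|_]; exact: valid_triv. Qed.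

Local Notation PS := {ffun code -> T}.
Definition QP : PS := [ffun d => cQ (eff d)].
Definition FP : {set PS} := [set s : PS | [exists d : code, s d \in cF (eff d)]].
Definition GP : BC -> PS := fun b => [ffun d => cG (eff d) b].
Definition DP : PS -> {ffun 'I_(k + k) -> option PS} -> PS :=
  fun s nb => [ffun d => cD (eff d) (s d)
                 [ffun j => omap (fun x : PS => x d) (nb j)]].

Lemma grunP C t p : grun QP GP DP C t p = [ffun d => crun (eff d) C t p].
Proof.
elim: t p => [|t IH] p; apply/ffunP => d.
  by rewrite !ffunE /crun /=; case: ifP => _; rewrite ?ffunE.
rewrite ffunE grun_S /DP ffunE IH ffunE /crun grun_S; congr (cD _ _ _).
apply/ffunP => j; rewrite !ffunE; case: ifP => //= _; by rewrite IH ffunE.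
Qed.

Lemma hP1 : QP \notin FP.
Proof.
rewrite inE negb_exists; apply/forallP => d; rewrite ffunE.
exact: validQ (valid_eff d).
Qed.

Lemma hP2 (nb : {ffun 'I_(k + k) -> option PS}) :
  (forall j, (nb j == None) || (nb j == Some QP)) -> DP QP nb = QP.
Proof.
move=> H; apply/ffunP => d; rewrite /DP !ffunE.
apply: (validS (valid_eff d)) => j; rewrite ffunE.
by case/orP: (H j) => /eqP -> //=; rewrite ffunE eqxx.
Qed.

Definition PA : automaton k := @mkA k PS QP FP GP DP hP1 hP2.

Lemma PA_fires C t : fires_at PA C t <->
  ((forall t', (t' < t)%N -> forall p, p \in C ->
      forall d, crun (eff d) C t' p \notin cF (eff d)) /\
   (forall p, p \in C -> exists d, crun (eff d) C t p \in cF (eff d))).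
Proof.
rewrite fires_mk /gfires; split; case=> a b; split.
- move=> t' lt p pC d; apply/negP => hd; move: (a t' lt p pC).
  by rewrite grunP inE; case/existsP; exists d; rewrite ffunE.
- move=> p pC; move: (b p pC); rewrite grunP inE => /existsP [d].
  by rewrite ffunE; exists d.
- move=> t' lt p pC; rewrite grunP inE negb_exists; apply/forallP => d.
  by rewrite ffunE; apply: a.
- move=> p pC; rewrite grunP inE; case: (b p pC) => d hd; apply/existsP.
  by exists d; rewrite ffunE.
Qed.

Section CodeOf.
Variables (A : automaton k) (h : (#|St A| <= c.+1)%N).

Definition fA (s : St A) : T := widen_ord h (enum_rank s).
Lemma fA_inj : injective fA.
Proof.
move=> x y /(congr1 val) /= E; apply: enum_rank_inj; exact: val_inj.
Qed.
Definition gA (i : T) : St A := odflt (Qst A) [pick s | fA s == i].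
Lemma gAK : cancel fA gA.
Proof.
move=> s; rewrite /gA; case: pickP => [s' /eqP/fA_inj -> // |/(_ s)].
by rewrite eqxx.
Qed.

Definition codeOf : code :=
  (fA (Qst A), fA @: fire A, [ffun b : BC => fA (@gen _ A (@tau _ A b))],
   [ffun x : T * {ffun 'I_(k + k) -> option T} => fA (@delta _ A (gA x.1) [ffun j => omap gA (x.2 j)])]).

Lemma crun_code C t p : crun codeOf C t p = fA (run A C t p).
Proof.
rewrite /crun; elim: t p => [|t IH] p /=.
  by case: ifP => _; rewrite /cG /cQ /= ?ffunE.
rewrite /cD /= ffunE /= IH gAK; congr (fA (delta _ _)); apply/ffunP => j.
by rewrite !ffunE; case: ifP => //= _; rewrite IH gAK.
Qed.

Lemma valid_code : valid codeOf.
Proof.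
apply/andP; split; first by rewrite /cQ /cF /= mem_imset ?Q_notin_fire //; exact: fA_inj.
apply/forallP => nb; apply/implyP => /forallP H.
rewrite /cD /cQ /= ffunE /= gAK Q_stable // => j; rewrite ffunE.
by case/orP: (H j) => /eqP -> //=; rewrite /cQ /= gAK eqxx.
Qed.

Lemma fires_code C t : gfires (cF codeOf) (crun codeOf C) C t <-> fires_at A C t.
Proof.
have E t' p : (crun codeOf C t' p \in cF codeOf) = (run A C t' p \in fire A).
  by rewrite crun_code /cF /= mem_imset //; exact: fA_inj.
rewrite /gfires /fires_at; split; case=> a b; split.
- by move=> t' lt p pC; rewrite -E; apply: a.
- by move=> p pC; rewrite -E; apply: b.
- by move=> t' lt p pC; rewrite E; apply: a.
- by move=> p pC; rewrite E; apply: b.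
Qed.
End CodeOf.
End Codes.

Theorem theorem18 (k : nat) (hk : (0 < k)%N) (Gam : config k -> Prop)
  (hGam : variation Gam)
  (hsol : exists A : automaton k, is_solution Gam A) :
  (exists A : automaton k, minimal_time_solution Gam A) <->
  (exists c : nat, forall C, Gam C -> (mss Gam C <= c)%N).
Proof.
split.
  case=> A [sA mA]; exists #|St A| => C GC; apply: pmin_le.
  by exists A; split => //; apply: mA.
case=> c hc.
have mftP : forall C, Gam C ->
   (exists A, is_solution Gam A /\ fires_at A C (mft Gam C)) /\
   (forall A t, is_solution Gam A -> fires_at A C t -> (mft Gam C <= t)%N).
  move=> C GC; split.
    apply: (pmin_spec (P := fun t => exists A : automaton k,
                               is_solution Gam A /\ fires_at A C t)).
    case: hsol => A0 s0; case: (s0 C GC) => t0 f0; by exists t0, A0.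
  by move=> A t sA fA'; apply: pmin_le; exists A.
have mssP : forall C, Gam C -> exists A,
    [/\ is_solution Gam A, fires_at A C (mft Gam C) & (#|St A| <= c.+1)%N].
  move=> C GC.
  have := pmin_spec (P := fun n => exists A : automaton k,
     [/\ is_solution Gam A, fires_at A C (mft Gam C) & #|St A| = n]).
  case.
    by case: (mftP C GC) => [[A [sA fA']] _]; exists #|St A|, A.
  move=> A [sA fA' nA]; exists A; split => //.
  by rewrite nA; apply: leqW; apply: hc.
have main : forall C, Gam C -> fires_at (PA c Gam) C (mft Gam C).
  move=> C GC; apply/PA_fires; split.
    move=> t' lt p pC d; rewrite /eff; case: ifP => [/andP[vd /asboolP gd]|_];
      last by rewrite /triv /cF /= in_set0.
    case: (gd C GC) => td ftd.
    have le : (mft Gam C <= td)%N.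
      apply: ((mftP C GC).2 (autoOf vd) td); last exact/fires_autoOf.
      move=> C' GC'; case: (gd C' GC') => t2 f2; exists t2; exact/fires_autoOf.
    exact: ftd.1 t' (leq_trans lt le) p pC.
  move=> p pC; case: (mssP C GC) => A [sA fA' hA].
  have gd : good Gam (codeOf hA).
    apply/andP; split; first exact: valid_code.
    apply/asboolP => C' GC'; case: (sA C' GC') => t2 f2; exists t2.
    exact/fires_code.
  exists (codeOf hA); rewrite /eff gd.
  by apply: ((fires_code hA C (mft Gam C)).2 fA').2.
exists (PA c Gam); split => // C GC; exists (mft Gam C); exact: main.
Qed.
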